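(* Let $R$ be a commutative ring. If $(A,d)$ is a dg-Artinian acyclic differential graded $R$-algebra, then $(A,d)$ is dg-Noetherian.
   Context: A differential graded (dg) $R$-algebra $(A,d)$ is a $\mathbb{Z}$-graded $R$-algebra $A$ with an $R$-linear endomorphism $d$, homogeneous of degree $1$, with $d^2=0$ and $d(ab)=d(a)b+(-1)^{|a|}a\,d(b)$ for homogeneous $a,b$. It is acyclic if $\ker(d)=\operatorname{im}(d)$. A dg-ideal is a graded ideal $I$ with $d(I)\subseteq I$; $(A,d)$ is dg-Noetherian (resp. dg-Artinian) if it satisfies the ascending (resp. descending) chain condition on dg-ideals (i.e. on dg-submodules of $A$ viewed as a dg-module over itself). *)

(* Defs.v *)
From HB Require Import structures.
From mathcomp Require Import all_boot all_order all_algebra.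
Set Implicit Arguments. Unset Strict Implicit. Unset Printing Implicit Defensive.
Import Order.TTheory GRing.Theory Num.Theory.
Local Open Scope ring_scope.

Definition is_grading (R : comPzRingType) (A : algType R) (G : int -> A -> Prop) : Prop :=
  [/\
      (forall n, G n 0 /\ (forall (r : R) x y, G n x -> G n y -> G n (r *: x + y))),
      (forall x : A, exists (s : seq int) (f : int -> A),
          [/\ uniq s, (forall n, G n (f n)) & x = \sum_(n <- s) f n]),
      (forall (s : seq int) (f : int -> A), uniq s -> (forall n, G n (f n)) ->
          \sum_(n <- s) f n = 0 -> forall n, n \in s -> f n = 0),
      (forall m n (x y : A), G m x -> G n y -> G (m + n) (x * y))
    & G 0 1].

Definition is_dg_algebra (R : comPzRingType) (A : algType R)
    (G : int -> A -> Prop) (d : {linear A -> A}) : Prop :=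
  [/\ is_grading G,
      (forall n x, G n x -> G (n + 1) (d x)),
      (forall x, d (d x) = 0)
    & (forall m (a b : A), G m a ->
         d (a * b) = d a * b + (-1) ^+ `|m|%N * (a * d b))].

(* acyclic: ker d = im d (im d ⊆ ker d already follows from d^2 = 0,
   but we state both inclusions). *)
Definition dg_acyclic (R : comPzRingType) (A : algType R) (d : {linear A -> A}) : Prop :=
  forall x : A, d x = 0 <-> exists y, x = d y.

(* dg-ideals = dg-submodules of A viewed as a (left) dg-module over itself:
   left ideals that are R-submodules, graded (contain the homogeneous
   components of their elements) and stable under d. *)
Definition is_dg_ideal (R : comPzRingType) (A : algType R)
    (G : int -> A -> Prop) (d : {linear A -> A}) (I : A -> Prop) : Prop :=
  [/\ I 0 /\ (forall x y, I x -> I y -> I (x + y)),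
      (forall (r : R) x, I x -> I (r *: x)),
      (forall (a x : A), I x -> I (a * x)),
      (forall (s : seq int) (f : int -> A), uniq s -> (forall n, G n (f n)) ->
          I (\sum_(n <- s) f n) -> forall n, n \in s -> I (f n))
    & (forall x, I x -> I (d x))].

Definition dg_noetherian (R : comPzRingType) (A : algType R)
    (G : int -> A -> Prop) (d : {linear A -> A}) : Prop :=
  forall I : nat -> A -> Prop,
    (forall k, is_dg_ideal G d (I k)) ->
    (forall k x, I k x -> I k.+1 x) ->
    exists N, forall k, (N <= k)%N -> forall x, I k x <-> I N x.

Definition dg_artinian (R : comPzRingType) (A : algType R)
    (G : int -> A -> Prop) (d : {linear A -> A}) : Prop :=
  forall I : nat -> A -> Prop,
    (forall k, is_dg_ideal G d (I k)) ->
    (forall k x, I k.+1 x -> I k x) ->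
    exists N, forall k, (N <= k)%N -> forall x, I k x <-> I N x.

(* Main.v *)
Require Import Defs.
From HB Require Import structures.
From mathcomp Require Import all_boot all_order all_algebra.
From Stdlib Require Import ClassicalEpsilon Classical.
From mathcomp Require classical_sets.
Set Implicit Arguments. Unset Strict Implicit. Unset Printing Implicit Defensive.
Import Order.TTheory GRing.Theory Num.Theory.
Local Open Scope ring_scope.

Lemma big_sub_uniq (A : nmodType) (s t : seq int) (F : int -> A) :
  uniq s -> uniq t -> {subset s <= t} -> (forall n, n \notin s -> F n = 0) ->
  \sum_(n <- t) F n = \sum_(n <- s) F n.
Proof.
move=> Us Ut st F0.
rewrite (bigID (fun n => n \in s)) /= [X in _ + X]big1 ?addr0; last first.
  by move=> n /F0.
rewrite -big_filter; apply: perm_big; apply: uniq_perm.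
- exact: filter_uniq.
- exact: Us.
by move=> n; rewrite mem_filter; case nS: (n \in s) => //=; rewrite (st _ nS).
Qed.

Section Grading.
Variable R : comPzRingType.
Variable A : algType R.
Variable G : int -> A -> Prop.
Variable d : {linear A -> A}.
Hypothesis HG : is_dg_algebra G d.

Lemma G_sub n : G n 0 /\ (forall (r : R) x y, G n x -> G n y -> G n (r *: x + y)).
Proof. by case: HG => [[Hs _ _ _ _] _ _ _]. Qed.
Lemma G_dec (x : A) : exists (s : seq int) (f : int -> A),
          [/\ uniq s, (forall n, G n (f n)) & x = \sum_(n <- s) f n].
Proof. by case: HG => [[_ Hs _ _ _] _ _ _]. Qed.
Lemma G_dir (s : seq int) (f : int -> A) : uniq s -> (forall n, G n (f n)) ->
          \sum_(n <- s) f n = 0 -> forall n, n \in s -> f n = 0.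
Proof. by case: HG => [[_ _ Hs _ _] _ _ _]; apply: Hs. Qed.
Lemma G_mul m n (x y : A) : G m x -> G n y -> G (m + n) (x * y).
Proof. by case: HG => [[_ _ _ Hs _] _ _ _]; apply: Hs. Qed.
Lemma G_one : G 0 1.
Proof. by case: HG => [[_ _ _ _ Hs] _ _ _]. Qed.
Lemma G_d n x : G n x -> G (n + 1) (d x).
Proof. by case: HG => [_ Hs _ _]; apply: Hs. Qed.
Lemma dd x : d (d x) = 0.
Proof. by case: HG => [_ _ Hs _]. Qed.
Lemma leib m (a b : A) : G m a -> d (a * b) = d a * b + (-1) ^+ `|m|%N * (a * d b).
Proof. by case: HG => [_ _ _ Hs]; apply: Hs. Qed.

Lemma G0 n : G n 0. Proof. by case: (G_sub n). Qed.
Lemma GD n x y : G n x -> G n y -> G n (x + y).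
Proof. by case: (G_sub n) => _ H gx gy; have := H 1 x y gx gy; rewrite scale1r. Qed.
Lemma GZ n (r : R) x : G n x -> G n (r *: x).
Proof. by case: (G_sub n) => H0 H gx; have := H r x 0 gx H0; rewrite addr0. Qed.
Lemma GN n x : G n x -> G n (- x).
Proof. by move=> gx; have := GZ (-1) gx; rewrite scaleN1r. Qed.
Lemma GB n x y : G n x -> G n y -> G n (x - y).
Proof. by move=> gx gy; apply: GD => //; apply: GN. Qed.

Definition decP (x : A) (p : seq int * (int -> A)) :=
  [/\ uniq p.1, (forall n, G n (p.2 n)) & x = \sum_(n <- p.1) p.2 n].
Definition dec (x : A) : seq int * (int -> A) :=
  epsilon (inhabits ([::], fun _ : int => 0 : A)) (decP x).
Definition sup x := (dec x).1.
Definition comp (n : int) (x : A) : A := if n \in sup x then (dec x).2 n else 0.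

Lemma dec_spec x : decP x (dec x).
Proof.
rewrite /dec; apply: epsilon_spec.
have [s [f [Us Gf ->]]] := G_dec x; by exists (s, f).
Qed.

Lemma sup_uniq x : uniq (sup x). Proof. by case: (dec_spec x). Qed.
Lemma comp_G n x : G n (comp n x).
Proof. rewrite /comp; case: ifP => _; last exact: G0. by case: (dec_spec x). Qed.
Lemma comp_out n x : n \notin sup x -> comp n x = 0.
Proof. by rewrite /comp => /negPf ->. Qed.
Lemma comp_sum x : x = \sum_(n <- sup x) comp n x.
Proof.
case: (dec_spec x) => _ _ {1}->; rewrite /sup /comp.
by rewrite big_seq_cond [RHS]big_seq_cond; apply: eq_bigr => n /andP[-> _].
Qed.
Lemma comp_sum_sub x t : uniq t -> {subset sup x <= t} ->
  x = \sum_(n <- t) comp n x.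
Proof.
move=> Ut st; rewrite (@big_sub_uniq _ (sup x) t (fun n => comp n x)) ?sup_uniq //; first exact: comp_sum.
by move=> n; apply: comp_out.
Qed.

Lemma comp_unique (s : seq int) (f : int -> A) x : uniq s -> (forall n, G n (f n)) ->
  x = \sum_(n <- s) f n -> forall n, comp n x = if n \in s then f n else 0.
Proof.
move=> Us Gf xE.
pose t := undup (sup x ++ s).
have Ut : uniq t by apply: undup_uniq.
pose g n := comp n x - (if n \in s then f n else 0).
have Gg n : G n (g n).
  by apply: GB; [apply: comp_G | case: ifP => _; [apply: Gf | apply: G0]].
have sg : \sum_(n <- t) g n = 0.
  rewrite sumrB -comp_sum_sub //; last first.
    by move=> n nx; rewrite mem_undup mem_cat nx.
  rewrite (@big_sub_uniq _ s t (fun n => if n \in s then f n else 0)) //; last first.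
  - by move=> n /negPf ->.
  - by move=> n ns; rewrite mem_undup mem_cat ns orbT.
  rewrite [X in _ - X](eq_big_seq f); last by move=> n ->.
  by rewrite -xE subrr.
move=> n; have [nt|nt] := boolP (n \in t).
  by apply/eqP; rewrite -subr_eq0; apply/eqP; apply: (G_dir Ut Gg sg).
move: nt; rewrite mem_undup mem_cat negb_or => /andP[n1 n2].
by rewrite comp_out // (negPf n2).
Qed.

Lemma comp0 n : comp n 0 = 0.
Proof. by rewrite (@comp_unique [::] (fun _ => 0)) ?big_nil //; move=> ?; apply: G0. Qed.

Lemma compD n x y : comp n (x + y) = comp n x + comp n y.
Proof.
pose t := undup (sup x ++ sup y).
rewrite (@comp_unique t (fun n => comp n x + comp n y)).
- case: ifP => // nt; move: nt; rewrite mem_undup mem_cat => /negbT.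
  by rewrite negb_or => /andP[n1 n2]; rewrite !comp_out ?addr0.
- exact: undup_uniq.
- by move=> m; apply: GD; apply: comp_G.
rewrite big_split /= -!comp_sum_sub //; try exact: undup_uniq.
- by move=> m my; rewrite mem_undup mem_cat my orbT.
- by move=> m my; rewrite mem_undup mem_cat my.
Qed.

Lemma compN n x : comp n (- x) = - comp n x.
Proof. by apply/eqP; rewrite -addr_eq0 -compD addNr comp0. Qed.
Lemma compB n x y : comp n (x - y) = comp n x - comp n y.
Proof. by rewrite compD compN. Qed.

Lemma comp_hom m n x : G m x -> comp n x = if n == m then x else 0.
Proof.
move=> gx; rewrite (@comp_unique [:: m] (fun n => if n == m then x else 0)) //.
- by rewrite inE; case: eqP.
- by move=> k; case: eqP => [->|_] //; apply: G0.
by rewrite big_seq1 eqxx.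
Qed.
Lemma comp_homE m x : G m x -> comp m x = x.
Proof. by move=> gx; rewrite (comp_hom _ gx) eqxx. Qed.

Lemma comp_mulr e n x y : G e y -> comp n (x * y) = comp (n - e) x * y.
Proof.
move=> gy.
rewrite (@comp_unique [seq m + e | m <- sup x] (fun n => comp (n - e) x * y)).
- case: ifP => // /negbT nm; rewrite comp_out ?mul0r //.
  by apply: contra nm => h; apply/mapP; exists (n - e) => //; rewrite subrK.
- by rewrite map_inj_uniq ?sup_uniq //; apply: addIr.
- by move=> k; have := G_mul (comp_G (k - e) x) gy; rewrite subrK.
by rewrite big_map {1}(comp_sum x) mulr_suml; apply: eq_bigr => m _; rewrite addrK.
Qed.

Lemma comp_d n x : comp n (d x) = d (comp (n - 1) x).
Proof.
rewrite (@comp_unique [seq m + 1 | m <- sup x] (fun n => d (comp (n - 1) x))).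
- case: ifP => // /negbT nm; rewrite comp_out ?linear0 //.
  by apply: contra nm => h; apply/mapP; exists (n - 1) => //; rewrite subrK.
- by rewrite map_inj_uniq ?sup_uniq //; apply: addIr.
- by move=> k; have := G_d (comp_G (k - 1) x); rewrite subrK.
by rewrite big_map {1}(comp_sum x) linear_sum; apply: eq_bigr => m _; rewrite addrK.
Qed.


Lemma d1 : d 1 = 0.
Proof.
have := leib 1 G_one; rewrite /= expr0 !mul1r !mulr1 => h.
by apply: (@addrI _ (d 1)); rewrite addr0 -h.
Qed.

Definition cyc x := d x = 0.
Definition hom x := exists n, G n x.
Definition hc x := hom x /\ cyc x.
Definition sub (U V : A -> Prop) := forall x, U x -> V x.

Lemma d_mulc a c : cyc c -> d (a * c) = d a * c.
Proof.
move=> cc; rewrite {1 2}(comp_sum a) mulr_suml !linear_sum mulr_suml.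
by apply: eq_bigr => m _; rewrite (leib _ (comp_G m a)) cc !mulr0 addr0.
Qed.
Lemma cyc_mul a c : cyc a -> cyc c -> cyc (a * c).
Proof. by move=> ca cc; rewrite /cyc d_mulc // ca mul0r. Qed.
Lemma cyc_comp n x : cyc x -> cyc (comp n x).
Proof. by move=> cx; rewrite /cyc -[n](addrK 1) -comp_d cx comp0. Qed.
Lemma cyc1 : cyc 1. Proof. exact: d1. Qed.
Lemma cycN x : cyc x -> cyc (- x). Proof. by rewrite /cyc linearN => ->; rewrite oppr0. Qed.
Lemma cycD x y : cyc x -> cyc y -> cyc (x + y).
Proof. by rewrite /cyc linearD => -> ->; rewrite addr0. Qed.
Lemma cyc0 : cyc 0. Proof. by rewrite /cyc linear0. Qed.
Lemma cycB x y : cyc x -> cyc y -> cyc (x - y).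
Proof. by move=> ? ?; apply: cycD => //; apply: cycN. Qed.
Lemma cyc_d x : cyc (d x). Proof. exact: dd. Qed.

Hypothesis Hac : dg_acyclic d.

Lemma exists_h : exists h, G (-1) h /\ d h = 1.
Proof.
have [y y1] := (Hac 1).1 d1.
exists (comp (-1) y); split; first exact: comp_G.
have := comp_d 0 y; rewrite -y1 (comp_homE G_one) sub0r => <-.
done.
Qed.

Lemma dh_mul h x : G (-1) h -> d h = 1 -> d (h * x) = x - h * d x.
Proof. by move=> gh dh; rewrite (leib _ gh) dh mul1r /= expr1 mulN1r. Qed.

Definition zideal (K : A -> Prop) :=
  [/\ K 0, (forall x y, K x -> K y -> K (x + y)),
      (forall a x, cyc a -> K x -> K (a * x)),
      (forall n x, K x -> K (comp n x)) & (forall x, K x -> cyc x)].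

Section ZI.
Variable K : A -> Prop.
Hypothesis HK : zideal K.
Lemma z0 : K 0. Proof. by case: HK. Qed.
Lemma zD x y : K x -> K y -> K (x + y). Proof. by case: HK => _ H _ _ _; apply: H. Qed.
Lemma zM a x : cyc a -> K x -> K (a * x). Proof. by case: HK => _ _ H _ _; apply: H. Qed.
Lemma zC n x : K x -> K (comp n x). Proof. by case: HK => _ _ _ H _; apply: H. Qed.
Lemma zcyc x : K x -> cyc x. Proof. by case: HK => _ _ _ _ H; apply: H. Qed.
Lemma zN x : K x -> K (- x).
Proof. by move=> kx; rewrite -mulN1r; apply: zM => //; apply: cycN; apply: cyc1. Qed.
Lemma zB x y : K x -> K y -> K (x - y). Proof. by move=> ? ?; apply: zD => //; apply: zN. Qed.
Lemma zsum (I : eqType) (s : seq I) (F : I -> A) :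
  (forall i, i \in s -> K (F i)) -> K (\sum_(i <- s) F i).
Proof.
elim: s => [|i s IH] H; first by rewrite big_nil; apply: z0.
rewrite big_cons; apply: zD; first by apply: H; rewrite inE eqxx.
by apply: IH => j js; apply: H; rewrite inE js orbT.
Qed.
End ZI.

Lemma sum_ind (Q : A -> Prop) (I : eqType) (s : seq I) (F : I -> A) :
  Q 0 -> (forall x y, Q x -> Q y -> Q (x + y)) ->
  (forall i, i \in s -> Q (F i)) -> Q (\sum_(i <- s) F i).
Proof.
move=> Q0 QD; elim: s => [|i s IH] H; first by rewrite big_nil.
rewrite big_cons; apply: QD; first by apply: H; rewrite inE eqxx.
by apply: IH => j js; apply: H; rewrite inE js orbT.
Qed.

Definition spanP (P : A -> Prop) (y : A) :=
  exists s : seq A, (forall z, z \in s -> P z) /\ y = \sum_(z <- s) z.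

Section Span.
Variable P : A -> Prop.
Lemma span0 : spanP P 0. Proof. by exists [::]; rewrite big_nil. Qed.
Lemma spanD x y : spanP P x -> spanP P y -> spanP P (x + y).
Proof.
move=> [s [Ps ->]] [t [Pt ->]]; exists (s ++ t); rewrite big_cat; split => //.
by move=> z; rewrite mem_cat => /orP[/Ps|/Pt].
Qed.
Lemma span_gen z : P z -> spanP P z.
Proof. by move=> Pz; exists [:: z]; rewrite big_seq1; split => // w; rewrite inE => /eqP ->. Qed.
Lemma span_ind (Q : A -> Prop) : Q 0 -> (forall x y, Q x -> Q y -> Q (x + y)) ->
  (forall z, P z -> Q z) -> forall y, spanP P y -> Q y.
Proof.
move=> Q0 QD QP y [s [Ps ->]]; apply: sum_ind => // z zs; apply: QP; exact: Ps.
Qed.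
Lemma span_sum (I : eqType) (s : seq I) (F : I -> A) :
  (forall i, i \in s -> spanP P (F i)) -> spanP P (\sum_(i <- s) F i).
Proof. by move=> H; apply: sum_ind => //; [apply: span0 | apply: spanD]. Qed.
Lemma span_map (f : A -> A) : f 0 = 0 -> (forall x y, f (x + y) = f x + f y) ->
  (forall z, P z -> spanP P (f z)) -> forall y, spanP P y -> spanP P (f y).
Proof.
move=> f0 fD fP; apply: span_ind; first by rewrite f0; apply: span0.
- by move=> x y; rewrite fD; apply: spanD.
exact: fP.
Qed.
Lemma zideal_span : (forall z, P z -> cyc z) ->
  (forall a z, cyc a -> P z -> spanP P (a * z)) ->
  (forall n z, P z -> spanP P (comp n z)) -> zideal (spanP P).
Proof.
move=> Pc Pm Pn; split.
- exact: span0.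
- exact: spanD.
- move=> a x ca; apply: span_map; [exact: mulr0 | exact: mulrDr | by move=> z; apply: Pm].
- move=> n; apply: span_map; [exact: comp0 | exact: compD | by move=> z; apply: Pn].
apply: span_ind; [exact: cyc0 | exact: cycD | exact: Pc].
Qed.
End Span.

Definition sumZ (U V : A -> Prop) x := exists a b, U a /\ V b /\ x = a + b.
Definition capZ (U V : A -> Prop) x := U x /\ V x.
Definition Zc y x := exists a, cyc a /\ x = a * y.
Definition prodZ (X Y : A -> Prop) :=
  spanP (fun z => exists x y, [/\ X x, Y y, hom x, hom y & z = x * y]).
Definition zero (x : A) := x = 0.

Lemma zideal_cyc : zideal cyc.
Proof.
split; [exact: cyc0 | exact: cycD | by move=> a x ca cx; apply: cyc_mul
       | by move=> n x; apply: cyc_comp | by []].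
Qed.

Lemma zideal_zero : zideal zero.
Proof.
rewrite /zero; split => //.
- by move=> x y -> ->; rewrite addr0.
- by move=> a x _ ->; rewrite mulr0.
- by move=> n x ->; rewrite comp0.
- by move=> x ->; apply: cyc0.
Qed.

Lemma zideal_cap U V : zideal U -> zideal V -> zideal (capZ U V).
Proof.
move=> hU hV; split.
- by split; apply: z0.
- by move=> x y [? ?] [? ?]; split; apply: zD.
- by move=> a x ca [? ?]; split; apply: zM.
- by move=> n x [? ?]; split; apply: zC.
by move=> x [ux _]; apply: (zcyc hU).
Qed.

Lemma zideal_sum U V : zideal U -> zideal V -> zideal (sumZ U V).
Proof.
move=> hU hV; split.
- by exists 0, 0; rewrite addr0; split; [apply: z0 | split; [apply: z0 | ]].
- move=> x y [a [b [ua [vb ->]]]] [a' [b' [ua' [vb' ->]]]].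
  exists (a + a'), (b + b'); split; first exact: zD.
  by split; [apply: zD | rewrite addrACA].
- move=> c x cc [a [b [ua [vb ->]]]]; exists (c * a), (c * b).
  by split; [apply: zM | split; [apply: zM | rewrite mulrDr]].
- move=> n x [a [b [ua [vb ->]]]]; exists (comp n a), (comp n b).
  by split; [apply: zC | split; [apply: zC | rewrite compD]].
move=> x [a [b [ua [vb ->]]]]; apply: cycD; [exact: (zcyc hU) | exact: (zcyc hV)].
Qed.

Lemma sumZl U V x : zideal V -> U x -> sumZ U V x.
Proof. by move=> hV ux; exists x, 0; split => //; split; [apply: z0 | rewrite addr0]. Qed.
Lemma sumZr U V x : zideal U -> V x -> sumZ U V x.
Proof. by move=> hU vx; exists 0, x; split; [apply: z0 | split; [ | rewrite add0r]]. Qed.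

Lemma zideal_Zc y : hc y -> zideal (Zc y).
Proof.
move=> [[e gy] cy]; split.
- by exists 0; rewrite mul0r; split => //; apply: cyc0.
- by move=> x1 x2 [a [ca ->]] [b [cb ->]]; exists (a + b); rewrite mulrDl; split => //; apply: cycD.
- by move=> c x cc [a [ca ->]]; exists (c * a); rewrite mulrA; split => //; apply: cyc_mul.
- move=> n x [a [ca ->]]; exists (comp (n - e) a); split; first exact: cyc_comp.
  exact: comp_mulr.
by move=> x [a [ca ->]]; apply: cyc_mul.
Qed.

Lemma Zc_self y : Zc y y.
Proof. by exists 1; rewrite mul1r; split => //; apply: cyc1. Qed.

Lemma zideal_prod X Y : zideal X -> zideal Y -> zideal (prodZ X Y).
Proof.
move=> hX hY; apply: zideal_span.
- move=> z [x [y [Xx Yy _ _ ->]]]; apply: cyc_mul; [exact: (zcyc hX) | exact: (zcyc hY)].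
- move=> a z ca [x [y [Xx Yy [p gx] [q gy] ->]]].
  rewrite (comp_sum a) mulr_suml; apply: span_sum => m _.
  apply: span_gen; exists (comp m a * x), y; split => //.
  + by apply: zM => //; apply: cyc_comp.
  + by exists (m + p); apply: G_mul => //; apply: comp_G.
  + by exists q.
  + by rewrite mulrA.
move=> n z [x [y [Xx Yy [p gx] [q gy] ->]]].
rewrite (comp_hom _ (G_mul gx gy)); case: eqP => _; last exact: span0.
by apply: span_gen; exists x, y; split => //; [exists p | exists q].
Qed.

Lemma mem_prod X Y x y : zideal X -> zideal Y -> X x -> Y y -> prodZ X Y (x * y).
Proof.
move=> hX hY Xx Yy; rewrite (comp_sum x) (comp_sum y) mulr_suml.
apply: span_sum => m _; rewrite mulr_sumr; apply: span_sum => k _.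
apply: span_gen; exists (comp m x), (comp k y); split => //.
- exact: zC.
- exact: zC.
- by exists m; apply: comp_G.
- by exists k; apply: comp_G.
Qed.

Lemma prod_sub X Y : zideal Y -> (forall x, X x -> cyc x) -> sub (prodZ X Y) Y.
Proof.
move=> hY cX; apply: span_ind; [exact: z0 | exact: zD |].
by move=> z [x [y [Xx Yy _ _ ->]]]; apply: zM => //; apply: cX.
Qed.

Definition atom (U V : A -> Prop) :=
  forall W, zideal W -> sub U W -> sub W V -> sub W U \/ sub V W.
Definition J x := cyc x /\ forall U V, zideal U -> zideal V -> sub U V -> atom U V ->
  forall v, V v -> U (x * v).

Lemma J_cyc x : J x -> cyc x. Proof. by case. Qed.

Lemma zideal_J : zideal J.
Proof.
split.
- split; first exact: cyc0.
  by move=> U V hU _ _ _ v _; rewrite mul0r; apply: z0.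
- move=> x y [cx Jx] [cy Jy]; split; first exact: cycD.
  by move=> U V hU hV UV aUV v Vv; rewrite mulrDl; apply: zD => //; [apply: (Jx U V) | apply: (Jy U V)].
- move=> a x ca [cx Jx]; split; first exact: cyc_mul.
  by move=> U V hU hV UV aUV v Vv; rewrite -mulrA; apply: zM => //; apply: (Jx U V).
- move=> n x [cx Jx]; split; first exact: cyc_comp.
  move=> U V hU hV UV aUV v Vv; rewrite (comp_sum v) mulr_sumr.
  apply: (zsum hU) => k _.
  have := comp_mulr (n + k) x (comp_G k v); rewrite addrK => <-.
  by apply: zC => //; apply: (Jx U V) => //; apply: zC.
by move=> x [].
Qed.

Lemma J_mulr x b : J x -> cyc b -> J (x * b).
Proof.
move=> [cx Jx] cb; split; first exact: cyc_mul.
by move=> U V hU hV UV aUV v Vv; rewrite -mulrA; apply: (Jx U V) => //; apply: zM.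
Qed.

Lemma nakayama x j : hc x -> J j -> x = j * x -> x = 0.
Proof.
move=> hx Jj xE; apply: NNPP => nx0.
have hZ := zideal_Zc hx.
pose P := fun X : A -> Prop => [/\ sub X (Zc x), ~ X x & ((exists z, X z) -> zideal X)].
have [M [[MZ nMx Mz] Mmax]] : exists M, P M /\ forall B, classical_sets.proper M B -> ~ P B.
  apply: classical_sets.Zorn_bigcup => F FP Ftot.
  have memb z : classical_sets.bigcup F id z -> exists X, [/\ F X, X z & zideal X].
    move=> [X FX Xz]; exists X; split => //.
    by case: (FP X FX) => _ _; apply; exists z.
  split.
  - by move=> z [X FX Xz]; case: (FP X FX) => H _ _; apply: H.
  - by move=> [X FX Xx]; case: (FP X FX) => _ H _; apply: H.
  move=> [w0 /memb [X0 [FX0 _ hX0]]]; split.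
  + by exists X0 => //; exact: (z0 hX0).
  + move=> a b /memb [X1 [F1 a1 h1]] /memb [X2 [F2 b2 h2]].
    case: (Ftot X1 X2 F1 F2) => s12.
    * by exists X2 => //; exact: (zD h2 (s12 _ a1) b2).
    * by exists X1 => //; exact: (zD h1 a1 (s12 _ b2)).
  + by move=> a b ca /memb [X1 [F1 b1 h1]]; exists X1 => //; exact: (zM h1 ca b1).
  + by move=> n b /memb [X1 [F1 b1 h1]]; exists X1 => //; exact: (zC h1 n b1).
  + by move=> b /memb [X1 [F1 b1 h1]]; apply: (zcyc h1).
have hM : zideal M.
  apply: Mz; apply: NNPP => ne; exfalso.
  apply: (Mmax zero); last first.
    split.
    - by move=> z ->; exists 0; rewrite mul0r; split => //; apply: cyc0.
    - by move=> H; apply: nx0.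
    - by move=> _; apply: zideal_zero.
  split; first by move=> z Mz0; exfalso; apply: ne; exists z.
  by move=> H; apply: ne; exists 0; apply: H.
have aM : atom M (Zc x).
  move=> W hW MW WZ; case: (classic (W x)) => Wx.
    by right => z [a [ca ->]]; apply: zM.
  left; apply: NNPP => nWM; apply: (Mmax W).
    by rewrite /classical_sets.proper; split.
  by rewrite /P; split => // _.
apply: nMx; rewrite xE.
by case: Jj => _ H; apply: (H M (Zc x)) => //; apply: Zc_self.
Qed.

Definition dccZ := forall K : nat -> A -> Prop, (forall k, zideal (K k)) ->
  (forall k x, K k.+1 x -> K k x) ->
  exists N, forall k, (N <= k)%N -> forall x, K k x <-> K N x.

Hypothesis Hdcc : dccZ.

Lemma minimal (P : (A -> Prop) -> Prop) K0 : zideal K0 -> P K0 ->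
  exists M, [/\ zideal M, P M & forall K, zideal K -> P K -> sub K M -> sub M K].
Proof.
move=> hK0 PK0; apply: NNPP => H.
have step M : zideal M -> P M -> exists K, [/\ zideal K, P K, sub K M & ~ sub M K].
  move=> hM PM; apply: NNPP => H2; apply: H; exists M; split => // K hK PK KM.
  by apply: NNPP => nMK; apply: H2; exists K.
pose F M := epsilon (inhabits (fun _ : A => True))
  (fun K => [/\ zideal K, P K, sub K M & ~ sub M K]).
pose sq k := iter k F K0.
have inv k : zideal (sq k) /\ P (sq k).
  elim: k => [|k [h1 h2]] /=; first by split.
  by have [? ? _ _] := epsilon_spec (inhabits (fun _ : A => True)) _ (step _ h1 h2); split.
have spec k : [/\ zideal (sq k.+1), P (sq k.+1), sub (sq k.+1) (sq k) & ~ sub (sq k) (sq k.+1)].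
  by have [h1 h2] := inv k; exact: (epsilon_spec (inhabits (fun _ : A => True)) _ (step _ h1 h2)).
have desc k x : sq k.+1 x -> sq k x by case: (spec k) => _ _ h _; apply: h.
have [N HN] := Hdcc (fun k => (inv k).1) desc.
have [_ _ _ nsub] := spec N.
by apply: nsub => x; rewrite (HN N.+1 (leqnSn N)).
Qed.

Definition noethZ (U V : A -> Prop) := forall C : nat -> A -> Prop,
  (forall k, zideal (C k)) -> (forall k, sub U (C k) /\ sub (C k) V) ->
  (forall k x, C k x -> C k.+1 x) ->
  exists N, forall k, (N <= k)%N -> forall x, C k x <-> C N x.

Lemma asc_le (C : nat -> A -> Prop) m k x : (forall k x, C k x -> C k.+1 x) ->
  (m <= k)%N -> C m x -> C k x.
Proof.
move=> aC; elim: k => [|k IH]; first by rewrite leqn0 => /eqP ->.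
by rewrite leq_eqVlt => /orP[/eqP -> //|/IH h /h]; apply: aC.
Qed.

Lemma noeth_trans U V W : zideal V -> zideal W -> sub U V -> sub V W ->
  noethZ U V -> noethZ V W -> noethZ U W.
Proof.
move=> hV hW UV VW n1 n2 C hC bC aC.
have [N1 H1] := n1 (fun k => capZ (C k) V) (fun k => zideal_cap (hC k) hV)
  (fun k => conj (fun x ux => conj ((bC k).1 x ux) (UV x ux)) (fun x (h : capZ (C k) V x) => h.2))
  (fun k x (h : capZ (C k) V x) => conj (aC k x h.1) h.2).
have b2 k : sub V (sumZ (C k) V) /\ sub (sumZ (C k) V) W.
  split; first by move=> x vx; apply: sumZr => //; apply: hC.
  by move=> x [a [b [ca [vb ->]]]]; apply: (zD hW); [apply: (bC k).2 | apply: VW].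
have [N2 H2] := n2 (fun k => sumZ (C k) V) (fun k => zideal_sum (hC k) hV) b2
  (fun k x '(ex_intro a (ex_intro b (conj ca (conj vb xE)))) =>
     ex_intro _ a (ex_intro _ b (conj (aC k a ca) (conj vb xE)))).
exists (maxn N1 N2) => k hk x; split; last by apply: asc_le.
move=> Ckx.
have hN1 : (N1 <= k)%N by apply: leq_trans hk; apply: leq_maxl.
have hN2 : (N2 <= k)%N by apply: leq_trans hk; apply: leq_maxr.
have : sumZ (C N2) V x by apply/(H2 k hN2); apply: sumZl.
move=> [a [b [ca [vb xE]]]].
have caN : C (maxn N1 N2) a by apply: asc_le ca => //; apply: leq_maxr.
have Ckb : C k b.
  have -> : b = x - a by rewrite xE (addrC a b) addrK.
  by apply: (zB (hC k)) => //; apply: asc_le caN.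
have : capZ (C N1) V b by apply/(H1 k hN1).
move=> [cb _]; rewrite xE; apply: (zD (hC _)) => //.
by apply: asc_le cb => //; apply: leq_maxl.
Qed.

Lemma noeth_atom I W Q : zideal I -> zideal W -> zideal Q -> sub I W -> sub I Q ->
  atom I Q -> noethZ W (sumZ W Q).
Proof.
move=> hI hW hQ IW IQ aIQ C hC bC aC.
case: (classic (exists k, sub Q (C k))) => [[k0 Qk0]|nQ].
  exists k0 => k hk x; split; last by apply: asc_le.
  move=> Ckx; have [a [b [wa [qb ->]]]] := (bC k).2 x Ckx.
  by apply: (zD (hC k0)); [apply: (bC k0).1 | apply: Qk0].
exists 0%N => k _ x; split; last by apply: asc_le.
move=> Ckx; have [a [b [wa [qb xE]]]] := (bC k).2 x Ckx.
have Ckb : C k b.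
  have -> : b = x - a by rewrite xE (addrC a b) addrK.
  by apply: (zB (hC k)) => //; apply: (bC k).1.
have [h|h] := aIQ (capZ (C k) Q) (zideal_cap (hC k) hQ)
  (fun z iz => conj ((bC k).1 z (IW z iz)) (IQ z iz)) (fun z (h : capZ (C k) Q z) => h.2).
  apply: (bC 0%N).1; rewrite xE; apply: (zD hW) => //.
  by apply: IW; apply: h.
by exfalso; apply: nQ; exists k => z /h [].
Qed.

Lemma noeth_mono U V V' : sub V' V -> noethZ U V -> noethZ U V'.
Proof.
move=> VV n C hC bC aC; apply: n => // k; split; first exact: (bC k).1.
by move=> x /((bC k).2); apply: VV.
Qed.

Lemma noeth_refl U : noethZ U U.
Proof.
move=> C hC bC aC; exists 0%N => k _ x; split => h.
  by apply: (bC 0%N).1; apply: (bC k).2.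
by apply: (bC k).1; apply: (bC 0%N).2.
Qed.

Definition sumLf (f : A -> A -> Prop) (B : A -> Prop) (ys : seq A) :=
  foldr (fun y S => sumZ (f y) S) B ys.

Lemma zideal_sumLf f B ys : zideal B -> (forall y, y \in ys -> zideal (f y)) ->
  zideal (sumLf f B ys).
Proof.
move=> hB; elim: ys => [|y ys IH] H //=.
apply: zideal_sum; first by apply: H; rewrite inE eqxx.
by apply: IH => z zs; apply: H; rewrite inE zs orbT.
Qed.

Lemma sumLf_mono f B B' ys : sub B B' -> sub (sumLf f B ys) (sumLf f B' ys).
Proof.
move=> BB; elim: ys => [|y ys IH] //= x [a [b [fa [sb ->]]]].
by exists a, b; split => //; split => //; apply: IH.
Qed.

Lemma sumLf_sub f B ys W : zideal W -> sub B W -> (forall y, y \in ys -> sub (f y) W) ->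
  sub (sumLf f B ys) W.
Proof.
move=> hW BW; elim: ys => [|y ys IH] H //= x [a [b [fa [sb ->]]]].
apply: (zD hW); first by apply: (H y) => //; rewrite inE eqxx.
by apply: IH => // z zs; apply: H; rewrite inE zs orbT.
Qed.

Lemma sumLf_pull f B B' Q ys : sub B (sumZ Q B') ->
  sub (sumLf f B ys) (sumZ Q (sumLf f B' ys)).
Proof.
move=> BQ; elim: ys => [|y ys IH] //= x [a [b [fa [sb ->]]]].
have [c [b' [qc [sb' ->]]]] := IH b sb.
exists c, (a + b'); split => //; split; last by rewrite addrCA.
by exists a, b'.
Qed.

Lemma zideal_rmul X t : zideal X -> hc t -> zideal (fun z => exists b, X b /\ z = b * t).
Proof.
move=> hX [[k gt] ct]; split.
- by exists 0; rewrite mul0r; split => //; apply: z0.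
- by move=> x y [b [Xb ->]] [b' [Xb' ->]]; exists (b + b'); rewrite mulrDl; split => //; apply: zD.
- by move=> c x cc [b [Xb ->]]; exists (c * b); rewrite mulrA; split => //; apply: zM.
- move=> n x [b [Xb ->]]; exists (comp (n - k) b); split; first exact: zC.
  exact: comp_mulr.
by move=> x [b [Xb ->]]; apply: cyc_mul => //; apply: (zcyc hX).
Qed.

Lemma brauer T : zideal T -> ~ sub T J ->
  exists a t, [/\ T a, T t, hom a, hom t & ~ J (a * t)].
Proof.
move=> hT nTJ; apply: NNPP => H; apply: nTJ => x Tx.
have HJ a t : T a -> T t -> hom a -> hom t -> J (a * t).
  by move=> Ta Tt ha ht; apply: NNPP => nJ; apply: H; exists a, t; split.
split; first exact: (zcyc hT).
move=> U V hU hV UV aUV v Vv.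
pose W := sumZ (prodZ T V) U.
have hW : zideal W by apply: zideal_sum => //; apply: zideal_prod.
have WV : sub W V.
  move=> z [a [b [pa [ub ->]]]]; apply: (zD hV); last exact: UV.
  by apply: (prod_sub hV (zcyc hT)).
have UW : sub U W by move=> z uz; apply: sumZr => //; apply: zideal_prod.
case: (aUV W hW UW WV) => [WU|VW].
  by apply: WU; apply: sumZl => //; apply: mem_prod.
have [p [u [pp [uu ->]]]] := VW v Vv.
rewrite mulrDr; apply: (zD hU); last by apply: (zM hU) => //; apply: (zcyc hT).
move: p pp; apply: span_ind.
- by rewrite mulr0; apply: z0.
- by move=> y z Uy Uz; rewrite mulrDr; apply: zD.
move=> z [t' [v' [Tt' Vv' ht' hv' ->]]].
rewrite (comp_sum x) mulr_suml; apply: (zsum hU) => m _.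
rewrite mulrA; case: (HJ (comp m x) t') => //.
- exact: (zC hT).
- by exists m; apply: comp_G.
by move=> _ H2; apply: (H2 U V).
Qed.

Lemma atom_eq X T : sub X T -> sub T X -> atom J T -> atom J X.
Proof.
move=> XT TX aT W hW JW WX; case: (aT W hW JW (fun z h => XT z (WX z h))) => h; first by left.
by right => z /XT /h.
Qed.

Lemma semisimple : exists ys : seq A,
  (forall y, y \in ys -> hc y /\ atom J (sumZ (Zc y) J)) /\ sumLf Zc J ys 1.
Proof.
pose P K := sub J K /\ exists ys : seq A,
  (forall y, y \in ys -> hc y /\ atom J (sumZ (Zc y) J)) /\ sumLf Zc K ys 1.
have PK : P cyc by split; [exact: J_cyc | exists [::]; split => //; apply: cyc1].
have [K0 [hK0 [JK0 [ys [Hys Hone]]] Kmin]] := minimal zideal_cyc PK.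
case: (classic (sub K0 J)) => [K0J|nK0J].
  by exists ys; split => //; apply: (sumLf_mono K0J).
exfalso.
have [T [hT [JT TK0 nTJ] Tmin]] :=
  @minimal (fun T => [/\ sub J T, sub T K0 & ~ sub T J]) K0 hK0 (And3 JK0 (fun x h => h) nK0J).
have aT : atom J T.
  move=> W hW JW WT; case: (classic (sub W J)) => [h|h]; first by left.
  by right; apply: Tmin => //; split => // z /WT /TK0.
have [a [t [Ta Tt [p ga] [k gt] naJt]]] := brauer hT nTJ.
have ct : cyc t by apply: (zcyc hT).
have ca : cyc a by apply: (zcyc hT).
have hTt := zideal_rmul hT (conj (ex_intro _ k gt) ct).
pose Tt1 := fun z => exists b, T b /\ z = b * t.
have hY : zideal (sumZ Tt1 J) by apply: zideal_sum => //; apply: zideal_J.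
have YT : sub (sumZ Tt1 J) T.
  move=> z [u [j [[b [Tb ->]] [Jj ->]]]]; apply: (zD hT); last exact: JT.
  by apply: (zM hT) => //; apply: (zcyc hT).
have [YJ|TY] := aT _ hY (fun z jz => sumZr hTt jz) YT.
  by apply: naJt; apply: YJ; apply: sumZl; [apply: zideal_J | exists a].
have [u [j [[e [Te uE]] [Jj tE]]]] := TY t Tt.
pose e0 := comp 0 e; pose j' := comp k j.
have tE' : t = e0 * t + j'.
  have := congr1 (comp k) tE; rewrite compD uE (comp_mulr k _ gt) subrr (comp_homE gt).
  done.
have Te0 : T e0 by apply: zC.
have Jj' : J j' by apply: (zC zideal_J).
have ge0 : G 0 e0 by apply: comp_G.
have ce0 : cyc e0 by apply: (zcyc hT).
have et : e0 * t = t - j' by rewrite {2}tE' addrK.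
pose X := fun b => T b /\ J (b * t).
have hX : zideal X.
  split.
  - by split; [apply: z0 | rewrite mul0r; apply: (z0 zideal_J)].
  - by move=> x y [Tx Jx] [Ty Jy]; split; [apply: zD | rewrite mulrDl; apply: (zD zideal_J)].
  - move=> c x cc [Tx Jx]; split; first exact: zM.
    by rewrite -mulrA; apply: (zM zideal_J).
  - move=> n x [Tx Jx]; split; first exact: zC.
    have := comp_mulr (n + k) x gt; rewrite addrK => <-.
    exact: (zC zideal_J).
  by move=> x [Tx _]; apply: (zcyc hT).
have XJ : sub X J.
  have JX : sub J X by move=> z jz; split; [apply: JT | apply: J_mulr].
  case: (aT X hX JX (fun z (h : X z) => h.1)) => // TX.
  by exfalso; apply: naJt; have [] := TX a Ta.
have Jee : J (e0 * e0 - e0).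
  apply: XJ; split.
    by apply: (zB hT) => //; apply: (zM hT).
  rewrite mulrBl -mulrA et mulrBr et addrAC subrr add0r.
  by apply: (zN zideal_J); apply: (zM zideal_J).
have ne0J : ~ J e0.
  move=> Je0; apply: naJt; apply: (zM zideal_J) => //.
  by rewrite tE'; apply: (zD zideal_J) => //; apply: J_mulr.
pose K' := fun z => exists kk jj, [/\ K0 kk, J jj & z = kk * (1 - e0) + jj].
have g1e : G 0 (1 - e0) by apply: GB => //; apply: G_one.
have hK' : zideal K'.
  split.
  - by exists 0, 0; rewrite mul0r addr0; split => //; [apply: z0 | apply: (z0 zideal_J)].
  - move=> x y [k1 [j1 [K1 J1 ->]]] [k2 [j2 [K2 J2 ->]]].
    exists (k1 + k2), (j1 + j2); split; [exact: zD | exact: (zD zideal_J) |].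
    by rewrite mulrDl addrACA.
  - move=> c x cc [k1 [j1 [K1 J1 ->]]]; exists (c * k1), (c * j1).
    by split; [exact: zM | exact: (zM zideal_J) | rewrite mulrDr mulrA].
  - move=> n x [k1 [j1 [K1 J1 ->]]]; exists (comp n k1), (comp n j1).
    split; [exact: zC | exact: (zC zideal_J) |].
    by rewrite compD (comp_mulr n _ g1e) subr0.
  move=> x [k1 [j1 [K1 J1 ->]]]; apply: cycD; last exact: J_cyc.
  by apply: cyc_mul; [apply: (zcyc hK0) | apply: cycB => //; apply: cyc1].
have K'K0 : sub K' K0.
  move=> x [k1 [j1 [K1 J1 ->]]]; apply: (zD hK0); last exact: JK0.
  rewrite mulrBr mulr1; apply: (zB hK0) => //.
  by apply: (zM hK0); [apply: (zcyc hK0) | apply: TK0].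
have K0sum : sub K0 (sumZ (Zc e0) K').
  move=> x Kx; exists (x * e0), (x * (1 - e0) + 0); split.
    by exists x; split => //; apply: (zcyc hK0).
  split; first by exists x, 0; split => //; apply: (z0 zideal_J).
  by rewrite addr0 mulrBr mulr1 addrC subrK.
have ne0K' : ~ K' e0.
  move=> [k1 [j1 [K1 J1 e0E]]]; apply: ne0J.
  have Jee2 : J (e0 * e0).
    rewrite {1}e0E mulrDl -mulrA mulrBl mul1r.
    apply: (zD zideal_J); last exact: J_mulr.
    apply: (zM zideal_J); first exact: (zcyc hK0).
    by rewrite -opprB; apply: (zN zideal_J).
  have -> : e0 = e0 * e0 - (e0 * e0 - e0) by rewrite opprB addrC subrK.
  exact: (zB zideal_J).
have TX0 : sub (sumZ (Zc e0) J) T.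
  move=> z [x [y [[c [cc ->]] [Jy ->]]]]; apply: (zD hT); last exact: JT.
  exact: zM.
have hZe : zideal (sumZ (Zc e0) J).
  by apply: zideal_sum; [apply: zideal_Zc; split => //; exists 0 | apply: zideal_J].
have TX1 : sub T (sumZ (Zc e0) J).
  apply: Tmin => //; split.
  - by move=> z jz; apply: sumZr => //; apply: zideal_Zc; split => //; exists 0.
  - by move=> z /TX0; apply: TK0.
  move=> h; apply: ne0J; apply: h; apply: sumZl; [apply: zideal_J | apply: Zc_self].
have PK' : P K'.
  split; first by move=> z jz; exists 0, z; rewrite mul0r add0r; split => //; apply: z0.
  exists (e0 :: ys); split.
    move=> y; rewrite inE => /orP[/eqP ->|yys]; last exact: Hys.
    split; first by split => //; exists 0.
    exact: (atom_eq TX0 TX1 aT).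
  exact: (sumLf_pull K0sum Hone).
by apply: ne0K'; apply: (Kmin K' hK' PK' K'K0); apply: TK0.
Qed.

Fixpoint pw (k : nat) : A -> Prop := if k is k'.+1 then prodZ (pw k') J else cyc.

Lemma zideal_pw k : zideal (pw k).
Proof. elim: k => [|k IH] /=; [exact: zideal_cyc | exact: zideal_prod IH zideal_J]. Qed.

Lemma pw_mulr k x b : pw k x -> cyc b -> pw k (x * b).
Proof.
elim: k x => [|k IH] x /=; first by move=> cx cb; apply: cyc_mul.
move=> px cb; move: x px; apply: span_ind.
- by rewrite mul0r; apply: span0.
- by move=> y z py pz; rewrite mulrDl; apply: spanD.
move=> z [y [j [py Jj _ _ ->]]]; rewrite -mulrA.
by apply: mem_prod => //; [apply: zideal_pw | apply: zideal_J | apply: J_mulr].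
Qed.

Lemma pw_desc k : sub (pw k.+1) (pw k).
Proof.
move=> x /=; move: x; apply: span_ind; [exact: (z0 (zideal_pw k)) | exact: (zD (zideal_pw k)) |].
by move=> z [y [j [py Jj _ _ ->]]]; apply: pw_mulr => //; apply: J_cyc.
Qed.

Lemma Jpw k j x : J j -> pw k x -> pw k.+1 (j * x).
Proof.
move=> Jj; elim: k x => [|k IH] x px.
  rewrite /= -[j * x]mul1r; apply: mem_prod; [exact: zideal_cyc | exact: zideal_J | exact: cyc1 |].
  exact: J_mulr.
move: x px; apply: span_ind.
- by rewrite mulr0; apply: span0.
- by move=> y z py pz; rewrite mulrDr; apply: spanD.
move=> z [y [j' [py Jj' _ _ ->]]]; rewrite mulrA.
by apply: mem_prod => //; [apply: (zideal_pw k.+1) | apply: zideal_J | apply: IH].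
Qed.

Lemma pw_nil : exists n, forall x, pw n x -> x = 0.
Proof.
have [N HN] := Hdcc zideal_pw pw_desc.
exists N => z0x Nz0; apply: NNPP => nz.
pose PL L := exists z l, [/\ pw N z, L l & z * l <> 0].
have PLc : PL cyc by exists z0x, 1; rewrite mulr1; split => //; apply: cyc1.
have [L [hL [z [l [Nz Ll nzl]]] Lmin]] := minimal zideal_cyc PLc.
have [m [k nzk]] : exists m k, comp m z * comp k l <> 0.
  apply: NNPP => H; apply: nzl; rewrite (comp_sum z) (comp_sum l) mulr_suml.
  apply: big1 => m _; rewrite mulr_sumr; apply: big1 => k _.
  by apply: NNPP => h; apply: H; exists m, k.
set z1 := comp m z in nzk; set l1 := comp k l in nzk.
have Nz1 : pw N z1 by apply: (zC (zideal_pw N)).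
have Ll1 : L l1 by apply: zC.
have hcl1 : hc l1 by split; [exists k; apply: comp_G | apply: (zcyc hL)].
clearbody z1 l1.
have [y [j [Ny Jj ne]]] : exists y j, [/\ pw N y, J j & y * (j * l1) <> 0].
  apply: NNPP => H; apply: nzk.
  have : pw N.+1 z1 by apply/(HN N.+1 (leqnSn N)).
  move: z1 {Nz1}; apply: span_ind => /=.
  - by rewrite mul0r.
  - by move=> a b ha hb; rewrite mulrDl ha hb addr0.
  move=> w [y [j [Ny Jj _ _ ->]]]; rewrite -mulrA.
  by apply: NNPP => h; apply: H; exists y, j.
pose Jl := fun w => exists b, J b /\ w = b * l1.
have hJl : zideal Jl := zideal_rmul zideal_J hcl1.
have JlL : sub Jl L by move=> w [b [Jb ->]]; apply: (zM hL) => //; apply: J_cyc.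
have PJl : PL Jl by exists y, (j * l1); split => //; exists j.
have [b [Jb l1E]] := Lmin Jl hJl PJl JlL l1 Ll1.
by apply: nzk; rewrite (nakayama hcl1 Jb l1E) mulr0.
Qed.

Lemma ex_min (P : nat -> Prop) : (exists k, P k) ->
  exists k, P k /\ forall j, (j < k)%N -> ~ P j.
Proof.
move=> [k]; elim/ltn_ind: k => k IH Pk.
case: (classic (exists j, (j < k)%N /\ P j)) => [[j [jk Pj]]|H].
  exact: IH j jk Pj.
by exists k; split => // j jk Pj; apply: H; exists j.
Qed.

Lemma mulc (I : A -> Prop) c ys z : (forall j, J j -> I (j * c)) ->
  sumLf Zc J ys z -> sumLf (fun y => Zc (y * c)) I ys (z * c).
Proof.
move=> HJ; elim: ys z => [|y ys IH] z /=; first exact: HJ.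
move=> [a [b [[a' [ca' ->]] [sb ->]]]].
exists (a' * (y * c)), (b * c); split; first by exists a'.
by split; [apply: IH | rewrite mulrDl mulrA].
Qed.

Lemma cap_atom I W Q : zideal I -> zideal W -> zideal Q -> sub I W -> sub I Q ->
  atom I Q -> ~ sub Q W -> sub (capZ W Q) I.
Proof.
move=> hI hW hQ IW IQ aIQ nQW.
case: (aIQ (capZ W Q) (zideal_cap hW hQ) (fun z iz => conj (IW z iz) (IQ z iz))
  (fun z (h : capZ W Q z) => h.2)) => // h.
by exfalso; apply: nQW => z /h [].
Qed.

Lemma layer I I' : zideal I -> zideal I' -> sub I I' ->
  (forall j x, J j -> I' x -> I (j * x)) -> noethZ I I'.
Proof.
move=> hI hI' II' HJ.
have [ys [Hys Hone]] := semisimple.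
pose Sig Q := [/\ zideal Q, sub I Q, sub Q I' & atom I Q].
have exQ W : zideal W -> sub I W -> sub W I' -> ~ sub I' W ->
    exists Q, Sig Q /\ ~ sub Q W.
  move=> hW IW WI' nI'W.
  have [x [I'x nWx]] : exists x, I' x /\ ~ W x.
    by apply: NNPP => H; apply: nI'W => x I'x; apply: NNPP => h; apply: H; exists x.
  have [n nWc] : exists n, ~ W (comp n x).
    apply: NNPP => H; apply: nWx; rewrite (comp_sum x); apply: (zsum hW) => n _.
    by apply: NNPP => h; apply: H; exists n.
  set c := comp n x in nWc.
  have I'c : I' c by apply: zC.
  have gc : G n c by apply: comp_G.
  have cc : cyc c by apply: (zcyc hI').
  have c1 := mulc (fun j Jj => HJ j c Jj I'c) Hone; rewrite mul1r in c1.
  have [y [yys nsub]] : exists y, y \in ys /\ ~ sub (Zc (y * c)) W.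
    apply: NNPP => H; apply: nWc; apply: (sumLf_sub hW IW _ c1) => y yys.
    by apply: NNPP => h; apply: H; exists y.
  have [[[ey gy] cy] aTy] := Hys y yys.
  have hcyc : hc (y * c) by split; [exists (ey + n); apply: G_mul | apply: cyc_mul].
  have hZ := zideal_Zc hcyc.
  exists (sumZ (Zc (y * c)) I); split; last first.
    by move=> QW; apply: nsub => z zz; apply: QW; apply: sumZl.
  split.
  - exact: zideal_sum.
  - by move=> z iz; apply: sumZr.
  - move=> z [a [b [[a' [ca' ->]] [Ib ->]]]]; apply: (zD hI'); last exact: II'.
    by apply: (zM hI') => //; apply: (zM hI').
  move=> K hK IK KQ.
  have hZy : zideal (Zc y) by apply: zideal_Zc; split => //; exists ey.
  have hT : zideal (sumZ (Zc y) J) by apply: zideal_sum => //; apply: zideal_J.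
  pose X := fun b => sumZ (Zc y) J b /\ K (b * c).
  have hX : zideal X.
    split.
    - by split; [apply: z0 | rewrite mul0r; apply: z0].
    - by move=> a b [Ta Ka] [Tb Kb]; split; [apply: zD | rewrite mulrDl; apply: zD].
    - move=> a b ca [Tb Kb]; split; first exact: zM.
      by rewrite -mulrA; apply: zM.
    - move=> m b [Tb Kb]; split; first exact: zC.
      have := comp_mulr (m + n) b gc; rewrite addrK => <-.
      exact: zC.
    by move=> b [Tb _]; apply: (zcyc hT).
  have JX : sub J X.
    by move=> j Jj; split; [apply: (sumZr hZy) | apply: IK; apply: HJ].
  case: (aTy X hX JX (fun z (h : X z) => h.1)) => [XJ|TX].
    left => k Kk; have [q [i [[a [ca ->]] [Ii kE]]]] := KQ k Kk.
    have Xay : X (a * y).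
      split; first by apply: sumZl; [apply: zideal_J | exists a].
      rewrite -mulrA; have -> : a * (y * c) = k - i by rewrite kE addrK.
      by apply: (zB hK) => //; apply: IK.
    rewrite kE; apply: (zD hI) => //; rewrite mulrA; apply: HJ => //.
    exact: XJ.
  right => q [q1 [i [[a [ca ->]] [Ii ->]]]]; apply: (zD hK); last exact: IK.
  apply: (zM hK) => //.
  by have [] := TX y (sumZl zideal_J (Zc_self y)).
pose pick W := epsilon (inhabits (fun _ : A => True)) (fun Q => Sig Q /\ ~ sub Q W).
pose Wseq := fix f (k : nat) : A -> Prop :=
  if k is k'.+1 then sumZ (f k') (pick (f k')) else I.
pose good k := forall j, (j < k)%N -> ~ sub I' (Wseq j).
have inv k : good k -> [/\ zideal (Wseq k), sub I (Wseq k), sub (Wseq k) I' & noethZ I (Wseq k)].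
  elim: k => [|k IH] gk.
    by split => //=; apply: noeth_refl.
  have [hW IW WI' nW] : [/\ zideal (Wseq k), sub I (Wseq k), sub (Wseq k) I' & noethZ I (Wseq k)].
    by apply: IH => j jk; apply: gk; apply: ltnW.
  have [[hQ IQ QI' aQ] nQW] : Sig (pick (Wseq k)) /\ ~ sub (pick (Wseq k)) (Wseq k).
    exact: (epsilon_spec (inhabits (fun _ : A => True)) (fun Q => Sig Q /\ ~ sub Q (Wseq k))
      (exQ _ hW IW WI' (gk k (ltnSn k)))).
  split => /=.
  - exact: zideal_sum.
  - by move=> z iz; apply: sumZl => //; apply: IW.
  - by move=> z [a [b [wa [qb ->]]]]; apply: (zD hI'); [apply: WI' | apply: QI'].
  apply: (noeth_trans hW (zideal_sum hW hQ) IW (fun z wz => sumZl hQ wz) nW).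
  exact: (noeth_atom hI hW hQ IW IQ aQ).
have spec k : good k.+1 -> Sig (pick (Wseq k)) /\ ~ sub (pick (Wseq k)) (Wseq k).
  move=> gk; have [hW IW WI' _] := inv k (fun j jk => gk j (ltnW jk)).
  exact: (epsilon_spec (inhabits (fun _ : A => True)) (fun Q => Sig Q /\ ~ sub Q (Wseq k))
      (exQ _ hW IW WI' (gk k (ltnSn k)))).
have ex : exists k, sub I' (Wseq k).
  apply: NNPP => nex.
  have allg k : good k by move=> j _ h; apply: nex; exists j.
  have hQs k : zideal (pick (Wseq k)) by have [[]] := spec k (allg _).
  pose Pq k := fix f (m : nat) : A -> Prop :=
    if m is m'.+1 then sumZ (f m') (pick (Wseq (k + m')%N)) else I.
  have hPq k m : zideal (Pq k m).
    by elim: m => [|m IH] //=; apply: zideal_sum.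
  have IPq k m : sub I (Pq k m).
    elim: m => [|m IH] z iz /=; first done.
    by apply: sumZl; [apply: hQs | apply: IH].
  have PqW kk mm : sub (Pq kk mm) (Wseq (kk + mm)%N).
    elim: mm => [|m IH] /=; first by rewrite addn0; have [] := inv kk (allg kk).
    rewrite addnS => z [a [b [pa [qb ->]]]]; exists a, b; split; first exact: IH.
    by split.
  have Wasc k z : Wseq k z -> Wseq k.+1 z by move=> wz; apply: sumZl.
  have Pasc k m z : Pq k m z -> Pq k m.+1 z by move=> pz; apply: sumZl.
  pose D k := fun x => exists m, Pq k m x.
  have hD k : zideal (D k).
    split.
    - by exists 0%N; apply: z0.
    - move=> x y [m1 p1] [m2 p2]; exists (maxn m1 m2); apply: zD => //.
      + by apply: asc_le (Pasc k) _ p1; apply: leq_maxl.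
      + by apply: asc_le (Pasc k) _ p2; apply: leq_maxr.
    - by move=> a x ca [m p]; exists m; apply: zM.
    - by move=> n x [m p]; exists m; apply: zC.
    by move=> x [m p]; apply: (zcyc (hPq k m)).
  have Ddesc k x : D k.+1 x -> D k x.
    move=> [m p]; exists m.+1; move: x p; elim: m => [|m IH] x /=.
      by move=> ix; apply: sumZl => //.
    move=> [a [b [pa [qb ->]]]]; exists a, b; split; first exact: IH.
    by rewrite -addSnnS; split.
  have [N HN] := Hdcc hD Ddesc.
  have [[hQN IQN QI'N aQN] nQW] := spec N (allg _).
  have [q [Qq nWq]] : exists q, pick (Wseq N) q /\ ~ Wseq N q.
    by apply: NNPP => H; apply: nQW => z Qz; apply: NNPP => h; apply: H; exists z.
  have DNq : D N q by exists 1%N => /=; apply: sumZr => //; rewrite addn0.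
  have [m Pm] : D N.+1 q by apply/(HN N.+1 (leqnSn N)).
  have indep m' x : Pq N.+1 m' x -> Wseq N.+1 x -> I x.
    elim: m' x => [|m' IH] x //=.
    move=> [p [q' [pp [qq ->]]]] Wx.
    have [hWj IWj _ _] := inv (N.+1 + m')%N (allg _).
    have [[hQj IQj _ aQj] nQj] := spec (N.+1 + m')%N (allg _).
    have Iq' : I q'.
      apply: (cap_atom hI hWj hQj IWj IQj aQj nQj); split => //.
      have -> : q' = p + q' - p by rewrite (addrC p) addrK.
      apply: (zB hWj); last exact: (PqW _ _ _ pp).
      exact: (asc_le (C := Wseq) Wasc (leq_addr m' N.+1) Wx).
    apply: IH => //.
    by apply: (zD (hPq _ _)) => //; apply: IPq.
  have [hWN IWN _ _] := inv N (allg _).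
  apply: nWq; apply: IWN; apply: (indep m q Pm).
  by apply: sumZr.
have [k [sk mk]] := ex_min ex.
have [_ _ _ nk] := inv k (fun j jk => mk j jk).
exact: noeth_mono sk nk.
Qed.

Lemma noeth_all : noethZ zero cyc.
Proof.
have [n pn0] := pw_nil.
have tot m : noethZ (pw m) (pw 0).
  elim: m => [|m IH]; first exact: noeth_refl.
  apply: (noeth_trans (zideal_pw m) (zideal_pw 0) (@pw_desc m)) => //.
  - by move=> x /(zcyc (zideal_pw m)).
  apply: layer; [exact: zideal_pw | exact: zideal_pw | exact: pw_desc |].
  by move=> j x Jj px; apply: Jpw.
move=> C hC bC aC; apply: (tot n) => // k; split; last exact: (bC k).2.
by move=> x /pn0 ->; apply: z0.
Qed.

Definition ZI (I : A -> Prop) x := I x /\ cyc x.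
Definition AK (K : A -> Prop) :=
  spanP (fun z => exists a k, [/\ K k, hom k & z = a * k]).

Lemma graded_of_comp (I : A -> Prop) : (forall n x, I x -> I (comp n x)) ->
  forall (s : seq int) (f : int -> A), uniq s -> (forall n, G n (f n)) ->
  I (\sum_(n <- s) f n) -> forall n, n \in s -> I (f n).
Proof.
move=> Ic s f Us Gf Is n ns.
by have := comp_unique Us Gf (erefl _) n; rewrite ns => <-; apply: Ic.
Qed.

Lemma dg_comp I n x : is_dg_ideal G d I -> I x -> I (comp n x).
Proof.
move=> [[I0 _] _ _ Igr _] Ix.
have [ns|ns] := boolP (n \in sup x); last by rewrite comp_out.
apply: (Igr (sup x) (fun n => comp n x)) => //.
- exact: sup_uniq.
- by move=> m; apply: comp_G.
by rewrite -comp_sum.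
Qed.

Lemma zideal_ZI I : is_dg_ideal G d I -> zideal (ZI I).
Proof.
move=> hI; have [[I0 ID] _ IM _ _] := hI; split.
- by split => //; apply: cyc0.
- by move=> x y [? ?] [? ?]; split; [apply: ID | apply: cycD].
- by move=> a x ca [? ?]; split; [apply: IM | apply: cyc_mul].
- by move=> n x [? ?]; split; [apply: dg_comp | apply: cyc_comp].
by move=> x [].
Qed.

Lemma dg_AK K : zideal K -> is_dg_ideal G d (AK K).
Proof.
move=> hK.
have Lm a : forall y, AK K y -> AK K (a * y).
  apply: span_map; [exact: mulr0 | exact: mulrDr |].
  by move=> z [b [k [Kk hk ->]]]; apply: span_gen; exists (a * b), k; rewrite mulrA.
split.
- by split; [apply: span0 | apply: spanD].
- by move=> r x Ax; rewrite -[x]mul1r scalerAl; apply: Lm.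
- exact: Lm.
- apply: graded_of_comp => n; apply: span_map; [exact: comp0 | exact: compD |].
  move=> z [b [k [Kk [e gk] ->]]]; apply: span_gen; exists (comp (n - e) b), k.
  by split => //; [exists e | apply: comp_mulr].
apply: span_map; [exact: linear0 | exact: linearD |].
move=> z [b [k [Kk hk ->]]]; apply: span_gen; exists (d b), k; split => //.
by apply: d_mulc; apply: (zcyc hK).
Qed.

Lemma ZAK K x : zideal K -> AK K x -> cyc x -> K x.
Proof.
move=> hK Ax cx; have [h [gh dh]] := exists_h.
have H : forall y, AK K y -> K (d (h * y)).
  apply: span_ind.
  - by rewrite mulr0 linear0; apply: z0.
  - by move=> y z ky kz; rewrite mulrDr linearD; apply: zD.
  move=> z [b [k [Kk hk ->]]]; rewrite mulrA d_mulc; last exact: (zcyc hK).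
  by apply: zM => //; apply: cyc_d.
by have := H x Ax; rewrite dh_mul // cx mulr0 subr0.
Qed.

Lemma KAK K x : zideal K -> K x -> AK K x.
Proof.
move=> hK Kx; rewrite (comp_sum x); apply: span_sum => n _; apply: span_gen.
exists 1, (comp n x); split; [exact: zC | by exists n; apply: comp_G | by rewrite mul1r].
Qed.

Lemma AK_mono K K' : sub K K' -> sub (AK K) (AK K').
Proof.
move=> KK; apply: span_ind; [exact: span0 | exact: spanD |].
by move=> z [a [k [Kk hk ->]]]; apply: span_gen; exists a, k; split => //; apply: KK.
Qed.

Lemma desc_le (C : nat -> A -> Prop) m k x : (forall k x, C k.+1 x -> C k x) ->
  (m <= k)%N -> C k x -> C m x.
Proof.
move=> dC; elim: k => [|k IH]; first by rewrite leqn0 => /eqP ->.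
by rewrite leq_eqVlt => /orP[/eqP -> //|/IH h /dC]; apply: h.
Qed.

Lemma dcc_of_art : dg_artinian G d -> dccZ.
Proof.
move=> Hart K hK dK.
have [N HN] := Hart (fun k => AK (K k)) (fun k => dg_AK (hK k))
  (fun k => AK_mono (fun x => dK k x)).
exists N => k Nk x; split; first by apply: desc_le.
move=> KNx; apply: ZAK => //; last exact: (zcyc (hK N)).
by apply/(HN k Nk); apply: KAK.
Qed.

Lemma noeth_of_Z : noethZ zero cyc -> dg_noetherian G d.
Proof.
move=> nZ I hI aI; have [h [gh dh]] := exists_h.
have [N HN] := nZ (fun k => ZI (I k)) (fun k => zideal_ZI (hI k))
  (fun k => conj (fun x (e : zero x) => match esym e in _ = y return ZI (I k) y with
              erefl => conj (let: And5 (conj i0 _) _ _ _ _ := hI k in i0) cyc0 end)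
            (fun x (h : ZI (I k) x) => h.2))
  (fun k x (h : ZI (I k) x) => conj (aI k x h.1) h.2).
exists N => k Nk x; split; last by apply: asc_le.
move=> Ikx.
have [[_ ID] _ IM _ Id] := hI k.
have [[_ IDN] _ IMN _ _] := hI N.
have -> : x = d (h * x) + h * d x by rewrite dh_mul // subrK.
apply: IDN.
  by have [] := (HN k Nk (d (h * x))).1 (conj (Id _ (IM _ _ Ikx)) (cyc_d _)).
apply: IMN.
by have [] := (HN k Nk (d x)).1 (conj (Id _ Ikx) (cyc_d _)).
Qed.

End Grading.

Theorem theorem2p7 (R : comPzRingType) (A : algType R)
    (G : int -> A -> Prop) (d : {linear A -> A}) :
  is_dg_algebra G d -> dg_acyclic d -> dg_artinian G d -> dg_noetherian G d.
Proof.
move=> HG Hac Hart.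
apply: (noeth_of_Z HG Hac).
exact: (noeth_all HG (dcc_of_art HG Hac Hart)).
Qed.
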